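(* Let $X$ be a real $n\times p$ matrix ($p<n$) of full rank with rows $x_1^\top,\dots,x_n^\top$, and define $$\kappa(X)=\max\Big\{|M| : M\subset\{1,\dots,n\},\ \exists\,\theta\in\mathbb{R}^p \text{ with } X\theta\neq 0 \text{ and } x_i^\top\theta=0\ \forall i\in M\Big\}.$$ Let $f\in\mathbb{R}^p$, $e\in\mathbb{R}^n$, $y=Xf+e$, let $F$ be a real matrix with $n$ columns such that $\ker(F)=\operatorname{ran}(X)$, and set $\tilde y=Fy$. If $\|e\|_0\leq (n-\kappa(X)-1)/2$, then $e$ is the unique solution of the problem $$\min_{s\in\mathbb{R}^n}\ \|s\|_0 \quad\text{subject to}\quad Fs=\tilde y.$$
   Context: For $x\in\mathbb{R}^n$, $\|x\|_0$ denotes the number of nonzero components of $x$, i.e. $\|x\|_0=|\{i\in\{1,\dots,n\}: x_i\neq 0\}|$. *)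

(* Defs.v *)
From HB Require Import structures.
From mathcomp Require Import all_boot all_order all_algebra.
From mathcomp Require Import boolp.
Set Implicit Arguments. Unset Strict Implicit. Unset Printing Implicit Defensive.
Import Order.TTheory GRing.Theory Num.Theory.
Local Open Scope ring_scope.

(* Vectors in R^n are column vectors 'cV[R]_n; x_i^T is row i X. *)

Definition l0 (R : realFieldType) (n : nat) (x : 'cV[R]_n) : nat :=
  #|[set i : 'I_n | x i ord0 != 0]|.

Definition kappa_adm (R : realFieldType) (n p : nat) (X : 'M[R]_(n, p))
  (M : {set 'I_n}) : Prop :=
  exists theta : 'cV[R]_p, X *m theta != 0 /\ forall i, i \in M -> row i X *m theta = 0.

(* kappa(X) = max of |M| over admissible M (0 if there is none). *)
Definition kappa (R : realFieldType) (n p : nat) (X : 'M[R]_(n, p)) : nat :=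
  \max_(M : {set 'I_n} | `[< kappa_adm X M >]) #|M|.

(* Main.v *)
Require Import Defs.
From HB Require Import structures.
From mathcomp Require Import all_boot all_order all_algebra.
From mathcomp Require Import boolp.
From mathcomp Require Import zify lra.
Import Order.TTheory GRing.Theory Num.Theory.
Local Open Scope ring_scope.

Theorem lemma2p1 (R : realFieldType) (n p m : nat) (X : 'M[R]_(n, p))
  (F : 'M[R]_(m, n)) (f : 'cV[R]_p) (e y : 'cV[R]_n) :
  (p < n)%N ->
  \rank X = p ->
  y = X *m f + e ->
  (forall s : 'cV[R]_n, F *m s = 0 <-> exists theta : 'cV[R]_p, s = X *m theta) ->
  (l0 e)%:R <= ((n%:R - (kappa X)%:R - 1) / 2 : R) ->
  [/\ F *m e = F *m y,
      (forall s : 'cV[R]_n, F *m s = F *m y -> (l0 e <= l0 s)%N) &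
      (forall s : 'cV[R]_n, F *m s = F *m y -> (l0 s <= l0 e)%N -> s = e)].
Proof.
move=> _ _ hy hF hl.
have hn : ((l0 e).*2 + kappa X + 1 <= n)%N.
  rewrite -(ler_nat R) !natrD -muln2 natrM.
  rewrite ler_pdivlMr // in hl; lra.
have hFe : F *m e = F *m y.
  rewrite hy mulmxDr.
  have -> : F *m (X *m f) = 0 by apply/hF; exists f.
  by rewrite add0r.
have key : forall s, F *m s = F *m y -> s != e -> (l0 e < l0 s)%N.
  move=> s hs hne.
  have [th hth] : exists th, s - e = X *m th.
    by apply/hF; rewrite mulmxBr hs hFe subrr.
  set M := [set i : 'I_n | (s - e) i ord0 == 0].
  have adm : kappa_adm X M.
    exists th; split; first by rewrite -hth subr_eq0.
    move=> i; rewrite inE => /eqP hi.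
    rewrite -row_mul -hth; apply/matrixP => a b.
    rewrite !mxE; move: hi; rewrite !mxE (ord1 b) => hi; exact: hi.
  have hM : (#|M| <= kappa X)%N.
    by apply: (leq_bigmax_cond (F := fun M : {set 'I_n} => #|M|)); apply/asboolP.
  have hC : (#|~: M| <= l0 s + l0 e)%N.
    apply: leq_trans (leq_card_setU _ _).
    apply: subset_leq_card; apply/subsetP => i.
    rewrite !inE !mxE => hi.
    case: (eqVneq (s i ord0) 0) => // h0; rewrite /=.
    by move: hi; rewrite h0 sub0r oppr_eq0.
  have := cardsC M; rewrite card_ord => hc.
  rewrite /l0 in hC hn *; lia.
split=> //.
- move=> s hs; case: (eqVneq s e) => [->|hne] //.
  exact: ltnW (key s hs hne).
- move=> s hs hle; case: (eqVneq s e) => [//|hne].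
  by have := key s hs hne; rewrite ltnNge hle.
Qed.
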